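(* Let $(G=(V,E),(p_e))$ be an IC model instance, $\pi$ a policy, $k,d\in\mathbb{Z}^+$. Then $F(\pi,k,d)=F_L(\pi,k,d)$.
   Context: IC model: directed graph $G=(V,E)$, each edge $e$ independently live with probability $p_e\in(0,1]$. Diffusion proceeds in rounds: in each round every node activated in the previous round (seed nodes count as activated when seeded) attempts to activate each inactive out-neighbor along an edge, succeeding iff the edge is live; attempted edges become observed. A realization $\phi=(L(\phi),D(\phi))$ records the observed live and dead edges; $\phi_\emptyset=(\emptyset,\emptyset)$. A policy $\pi$ maps a pair $(S,\phi)$ (current active set, current observed realization) to a single node. The $(\pi,k,d)$-process: set $(S,\phi)=(\emptyset,\phi_\emptyset)$; repeat $k$ times: select and activate $\pi(S,\phi)$, then observe the diffusion for $d$ rounds and update $(S,\phi)$ to the current active set and observed realization; finally let the diffusion terminate. $F(\pi,k,d)$ is the expected final number of active nodes. The L-$(\pi,k,d)$-process: set $(S,\phi)=(\emptyset,\phi_\emptyset)$; repeat $k-1$ times: select and activate $\pi(S,\phi)$, then observe $d$ rounds and update $(S,\phi)$; then decide $v^*=\pi(S,\phi)$ without activating it, wait for the diffusion to terminate, then activate $v^*$ and wait for the diffusion to terminate. $F_L(\pi,k,d)$ is the expected final number of active nodes of this process. *)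

(* Defs.v *)
From HB Require Import structures.
From mathcomp Require Import all_boot all_order all_algebra.
Set Implicit Arguments. Unset Strict Implicit. Unset Printing Implicit Defensive.
Import Order.TTheory GRing.Theory Num.Theory.

(* Independent Cascade model on a finite directed graph with node type V and
   edge set E : {set V * V} (edge (u,v) goes from u to v).
   A "world" w : {set V * V} with w \subset E is the set of live edges; each
   edge e in E is live independently with probability p e.  Given the world,
   every process below is deterministic (the policy is deterministic). *)

Section IC.
Variable V : finType.

(* State of the diffusion: active set, observed live edges, observed dead
   edges, and the frontier = nodes activated in the previous round (or
   seeded), which will attempt their out-edges in the next round. *)
Record icstate := IcState {
  act : {set V};
  obs_live : {set V * V};
  obs_dead : {set V * V};
  front : {set V} }.

Definition init_state : icstate := IcState set0 set0 set0 set0.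

Definition policy := {set V} -> ({set V * V} * {set V * V}) -> V.

Variables (E : {set V * V}) (w : {set V * V}).

Definition ic_round (st : icstate) : icstate :=
  let att := [set e in E | (e.1 \in front st) && (e.2 \notin act st)] in
  let newA := [set e.2 | e in att :&: w] in
  IcState (act st :|: newA) (obs_live st :|: (att :&: w))
          (obs_dead st :|: (att :\: w)) newA.

Definition ic_rounds (n : nat) (st : icstate) : icstate := iter n ic_round st.

(* Running until termination: each round with a nonempty frontier either
   activates a new node or empties the frontier, so #|V|.+1 rounds suffice;
   afterwards rounds are no-ops. *)
Definition ic_terminate (st : icstate) : icstate := ic_rounds #|V|.+1 st.

Definition ic_seed (v : V) (st : icstate) : icstate :=
  IcState (act st :|: [set v]) (obs_live st) (obs_dead st)
          (front st :|: ([set v] :\: act st)).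

Definition policy_choice (pi : policy) (st : icstate) : V :=
  pi (act st) (obs_live st, obs_dead st).

Definition ic_stage (pi : policy) (d : nat) (st : icstate) : icstate :=
  ic_rounds d (ic_seed (policy_choice pi st) st).

Definition process_final (pi : policy) (k d : nat) : icstate :=
  ic_terminate (iter k (ic_stage pi d) init_state).

Definition Lprocess_final (pi : policy) (k d : nat) : icstate :=
  let st := iter k.-1 (ic_stage pi d) init_state in
  let vstar := policy_choice pi st in
  ic_terminate (ic_seed vstar (ic_terminate st)).

End IC.

Section Expect.
Local Open Scope ring_scope.
Variables (R : numDomainType) (V : finType) (E : {set V * V}) (p : V * V -> R).

Definition world_prob (w : {set V * V}) : R :=
  \prod_(e in E) (if e \in w then p e else 1 - p e).

Definition expect (f : {set V * V} -> R) : R :=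
  \sum_(w : {set V * V} | w \subset E) world_prob w * f w.

Definition F_IC (pi : policy V) (k d : nat) : R :=
  expect (fun w => (#|act (process_final E w pi k d)|)%:R).

Definition FL_IC (pi : policy V) (k d : nat) : R :=
  expect (fun w => (#|act (Lprocess_final E w pi k d)|)%:R).
End Expect.

(* Main.v *)
Require Import Defs.
From HB Require Import structures.
From mathcomp Require Import all_boot all_order all_algebra.
Import Order.TTheory GRing.Theory Num.Theory.
Local Open Scope ring_scope.

Section Aux.
Variables (V : finType) (E w : {set V * V}).

Definition inv (st : icstate V) :=
  (front st \subset act st) /\
  (forall u v, (u,v) \in E -> (u,v) \in w -> u \in act st -> u \notin front st -> v \in act st).

Definition closedX (X : {set V}) :=
  forall u v, (u,v) \in E -> (u,v) \in w -> u \in X -> v \in X.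

Lemma round_inv st : inv st -> inv (ic_round E w st).
Proof.
move=> [Hf Hc]; split => /=; first exact: subsetUr.
move=> u v HE Hw; rewrite in_setU => /orP [Hu|Hu] Hn; last by rewrite Hu in Hn.
rewrite in_setU; apply/orP; have [Hv|Hv] := boolP (v \in act st); first by left.
have [Hfu|Hfu] := boolP (u \in front st); last by move: (Hc u v HE Hw Hu Hfu); rewrite (negbTE Hv).
right; apply/imsetP; exists (u,v) => //.
by rewrite !inE HE Hfu Hv Hw.
Qed.

Lemma seed_inv x st : inv st -> inv (ic_seed x st).
Proof.
move=> [Hf Hc]; split => /=.
  apply/subsetP => y; rewrite !inE => /orP [Hy|/andP [_ ->]]; last by rewrite orbT.
  by rewrite (subsetP Hf _ Hy).
move=> u v HE Hw; rewrite !inE => Hu Hn.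
have Hua : u \in act st.
  move: Hu Hn; case: (u \in act st) => //= /eqP -> .
  by case: (x \in act st) => //=; rewrite eqxx orbT.
have Hnf : u \notin front st by move: Hn; case: (u \in front st).
by rewrite (Hc u v HE Hw Hua Hnf).
Qed.

Lemma rounds_inv n st : inv st -> inv (ic_rounds E w n st).
Proof. by elim: n => [|n IH] //= H; apply: round_inv; apply: IH. Qed.

Lemma round_sub st : act st \subset act (ic_round E w st).
Proof. exact: subsetUl. Qed.

Lemma rounds_sub n st : act st \subset act (ic_rounds E w n st).
Proof.
elim: n => [|n IH] //; apply: (subset_trans IH); exact: round_sub.
Qed.

Lemma round_le st X : front st \subset act st -> closedX X -> act st \subset X ->
  act (ic_round E w st) \subset X.
Proof.
move=> Hf HX Hs /=; rewrite subUset Hs /=.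
apply/subsetP => y /imsetP [[a b]]; rewrite !inE /= => /andP [/andP [HE /andP [Ha _]] Hw] ->.
apply: (HX a b HE Hw); exact: (subsetP Hs _ (subsetP Hf _ Ha)).
Qed.

Lemma rounds_le n st X : inv st -> closedX X -> act st \subset X ->
  act (ic_rounds E w n st) \subset X.
Proof.
elim: n => [|n IH] //= Hi HX Hs; apply: round_le => //.
  by case: (rounds_inv n st Hi).
exact: IH.
Qed.

Lemma front_rounds n st :
  front (ic_rounds E w n st) = set0 \/ (n <= #|act (ic_rounds E w n st)|)%N.
Proof.
elim: n => [|n IH]; first by right.
rewrite /ic_rounds iterS -/(ic_rounds E w n st).
set s := ic_rounds E w n st.
set att := [set e in E | (e.1 \in front s) && (e.2 \notin act s)].
case: (set_0Vmem [set e.2 | e in att :&: w]) => [H0|[y Hy]].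
  by left; rewrite /= H0.
right; rewrite /=.
have Hdis : [disjoint act s & [set e.2 | e in att :&: w]].
  rewrite -setI_eq0; apply/eqP/setP => z; rewrite !inE.
  apply/negbTE/negP => /andP [Hz /imsetP [e]]; rewrite !inE => /andP [/andP [_ /andP [_ Hn]] _] He.
  by rewrite -He Hz in Hn.
rewrite cardsU (disjoint_setI0 Hdis) cards0 subn0.
have Hpos : (0 < #|[set e.2 | e in att :&: w]|)%N by apply/card_gt0P; exists y.
case: IH => [Hf|Hn].
  move: Hy => /imsetP [e]; rewrite !inE -/s Hf inE => /andP [/andP [_ /andP [//]]]. 
rewrite -/s; apply: leq_ltn_trans Hn _; by rewrite -addn1 leq_add2l.
Qed.

Lemma front_term st : front (ic_terminate E w st) = set0.
Proof.
case: (front_rounds #|V|.+1 st) => // H.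
by have := leq_trans H (max_card _); rewrite ltnn.
Qed.

Lemma term_closed st : inv st -> closedX (act (ic_terminate E w st)).
Proof.
move=> Hi u v HE Hw Hu; case: (rounds_inv #|V|.+1 st Hi) => _ Hc.
by apply: (Hc u v HE Hw Hu); rewrite -/(ic_terminate E w st) front_term inE.
Qed.

Lemma term_le st X : inv st -> closedX X -> act st \subset X ->
  act (ic_terminate E w st) \subset X.
Proof. exact: rounds_le. Qed.

Lemma term_sub st : act st \subset act (ic_terminate E w st).
Proof. exact: rounds_sub. Qed.

Lemma act_seed (x : V) (st : icstate V) : act (ic_seed x st) = act st :|: [set x].
Proof. by []. Qed.

Lemma init_inv : inv (init_state V).
Proof. by split => //=; move=> u v _ _; rewrite inE. Qed.

Lemma iter_inv pi d n : inv (iter n (ic_stage E w pi d) (init_state V)).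
Proof.
elim: n => [|n IH] /=; first exact: init_inv.
by apply: rounds_inv; apply: seed_inv.
Qed.

Lemma pointwise pi k d : (0 < k)%N ->
  act (process_final E w pi k d) = act (Lprocess_final E w pi k d).
Proof.
case: k => // k _; rewrite /process_final /Lprocess_final iterS [k.+1.-1]/=.
set S := iter k _ _.
have HS : inv S by exact: iter_inv.
set v := policy_choice pi S.
set T := ic_rounds E w d (ic_seed v S).
have HT : inv T by apply: rounds_inv; apply: seed_inv.
have Htm : inv (ic_terminate E w S) by exact: rounds_inv.
have Hsd : inv (ic_seed v (ic_terminate E w S)) by exact: seed_inv.
apply/eqP; rewrite eqEsubset; apply/andP; split.
- apply: term_le => //; first exact: term_closed.
  apply: rounds_le; [exact: seed_inv | exact: term_closed |].
  apply: (subset_trans _ (term_sub _)); rewrite !act_seed.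
  by apply: setSU; apply: term_sub.
- apply: term_le => //; first exact: term_closed.
  have H1 : act (ic_seed v S) \subset act (ic_terminate E w T).
    apply: (subset_trans _ (term_sub _)); exact: (rounds_sub d (ic_seed v S)).
  rewrite act_seed subUset; apply/andP; split.
    apply: term_le => //; first exact: term_closed.
    by apply: (subset_trans _ H1); apply: subsetUl.
  by apply: (subset_trans _ H1); apply: subsetUr.
Qed.

End Aux.

Theorem lemma2 (R : realFieldType) (V : finType) (E : {set V * V})
  (p : V * V -> R) (hp : forall e, e \in E -> 0 < p e <= 1)
  (pi : policy V) (k d : nat) (hk : (0 < k)%N) (hd : (0 < d)%N) :
  F_IC E p pi k d = FL_IC E p pi k d.
Proof.
rewrite /F_IC /FL_IC /expect; apply: eq_bigr => w _.
by rewrite pointwise.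
Qed.
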